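(* Let $Q_{\boldsymbol{X}}$ be a probability distribution on a covariate space $\mathcal{X}$ and let $L_2(Q_{\boldsymbol{X}})$ be the space of square-integrable measurable functions with respect to $Q_{\boldsymbol{X}}$. Suppose that the model class $\mathcal{F}\subset L_2(Q_{\boldsymbol{X}})$ is convex and contains all site-specific CATEs, i.e. $\tau^{(s)}\in\mathcal{F}$ for all $s\in\{1,\ldots,S\}$. Then the oracle minimax regret CATE \[ f_{\text{regret}}^*(\cdot)=\underset{f\in\mathcal{F}}{\arg\min}\ \max_{Q\in\mathcal{C}(Q_{\boldsymbol{X}})}\Big\{\mathbb{E}_Q\big[(Y(1)-Y(0)-f(\boldsymbol{X}))^2\big]-\min_{f'\in\mathcal{F}}\mathbb{E}_Q\big[(Y(1)-Y(0)-f'(\boldsymbol{X}))^2\big]\Big\} \] can be identified as \[ f_{\text{regret}}^*(\cdot)=\sum_{s=1}^S q_s^*\,\tau^{(s)}(\cdot)\quad\text{with}\quad \boldsymbol{q}^*=\underset{\boldsymbol{q}\in\Delta_{S-1}}{\arg\min}\ \boldsymbol{q}^\top\Gamma\boldsymbol{q}-\boldsymbol{q}^\top\boldsymbol{d}, \] where $\Gamma$ is the $S\times S$ matrix with entries $\Gamma_{k,l}=\mathbb{E}_{Q_{\boldsymbol{X}}}[\tau^{(k)}(\boldsymbol{X})\tau^{(l)}(\boldsymbol{X})]$ for $k,l\in\{1,\ldots,S\}$, and $\boldsymbol{d}=(\Gamma_{1,1},\ldots,\Gamma_{S,S})^\top$ is its diagonal vector.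
   Context: Setting: there are $S$ source sites; site $s$ has a joint distribution $P^{(s)}$ of binary-treatment potential outcomes $(Y(1),Y(0))$ (real-valued) and covariates $\boldsymbol{X}\in\mathcal{X}$, with site-specific conditional average treatment effect (CATE) $\tau^{(s)}(\boldsymbol{x})=\mathbb{E}_{P^{(s)}}[Y(1)-Y(0)\mid \boldsymbol{X}=\boldsymbol{x}]$. For a joint distribution $Q$ of $(Y(1),Y(0),\boldsymbol{X})$, $\tau_Q(\boldsymbol{x})=\mathbb{E}_Q[Y(1)-Y(0)\mid\boldsymbol{X}=\boldsymbol{x}]$. $\Delta_{S-1}=\{\boldsymbol{q}\in\mathbb{R}^S:\sum_s q_s=1,\ \min_s q_s\ge 0\}$. The multisite uncertainty set is $\mathcal{C}(Q_{\boldsymbol{X}})=\{Q=(Q_{\boldsymbol{X}},Q_{(Y(1),Y(0))\mid\boldsymbol{X}}):\ \tau_Q(\cdot)=\sum_{s=1}^S q_s\tau^{(s)}(\cdot)\text{ for some }\boldsymbol{q}\in\Delta_{S-1}\}$, i.e. all joint distributions with covariate marginal $Q_{\boldsymbol{X}}$ whose CATE is a convex combination of the site CATEs. *)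

(* Defs.v *)
From HB Require Import structures.
From mathcomp Require Import all_boot all_order all_algebra.
From mathcomp Require Import all_classical all_reals all_analysis.
Set Implicit Arguments. Unset Strict Implicit. Unset Printing Implicit Defensive.
Import Order.TTheory GRing.Theory Num.Theory.
Local Open Scope classical_set_scope.
Local Open Scope ring_scope.
Local Open Scope ereal_scope.

Definition L2 d (X : measurableType d) (R : realType) (QX : probability X R)
  : set (X -> R) :=
  [set f : X -> R | measurable_fun setT f /\ QX.-integrable setT (fun x => ((f x) ^+ 2)%:E)].

(* A joint distribution Q of (Y(1),Y(0),X) with covariate marginal QX is given by
   its conditional law Q_{(Y(1),Y(0))|X}, a probability kernel from X to R*R.
   E_Q[h] for h : R -> R -> X -> R. *)
Definition EQ d (X : measurableType d) (R : realType) (QX : probability X R)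
  (k : R.-pker X ~> (R * R)%type) (h : R -> R -> X -> R) : \bar R :=
  \int[QX]_x \int[k x]_y (h y.1 y.2 x)%:E.

Definition tauQ d (X : measurableType d) (R : realType)
  (k : R.-pker X ~> (R * R)%type) (x : X) : \bar R :=
  \int[k x]_y (y.1 - y.2)%:E.

Definition simplex (R : realType) (S : nat) : set ('I_S -> R) :=
  [set q | (forall s, 0 <= q s)%R /\ (\sum_(s < S) q s = 1)%R].

Definition mix (R : realType) (S : nat) T (tau : 'I_S -> T -> R) (q : 'I_S -> R)
  : T -> R := fun x => (\sum_(s < S) q s * tau s x)%R.

Definition C d (X : measurableType d) (R : realType) (QX : probability X R)
  (S : nat) (tau : 'I_S -> X -> R) : set (R.-pker X ~> (R * R)%type) :=
  [set k | EQ QX k (fun y1 _ _ => (y1 ^+ 2)%R) < +oo /\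
           EQ QX k (fun _ y0 _ => (y0 ^+ 2)%R) < +oo /\
           exists2 q, simplex q &
             {ae QX, forall x, tauQ k x = (mix tau q x)%:E}].

Definition mse d (X : measurableType d) (R : realType) (QX : probability X R)
  (k : R.-pker X ~> (R * R)%type) (f : X -> R) : \bar R :=
  EQ QX k (fun y1 y0 x => (y1 - y0 - f x) ^+ 2)%R.

Definition regret d (X : measurableType d) (R : realType) (QX : probability X R)
  (F : set (X -> R)) (k : R.-pker X ~> (R * R)%type) (f : X -> R) : \bar R :=
  mse QX k f - ereal_inf [set mse QX k f' | f' in F].

Definition worst_regret d (X : measurableType d) (R : realType)
  (QX : probability X R) (S : nat) (tau : 'I_S -> X -> R) (F : set (X -> R))
  (f : X -> R) : \bar R :=
  ereal_sup [set regret QX F k f | k in C QX tau].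

Definition Gamma d (X : measurableType d) (R : realType) (QX : probability X R)
  (S : nat) (tau : 'I_S -> X -> R) (k l : 'I_S) : R :=
  fine (\int[QX]_x (tau k x * tau l x)%:E).

Definition qobj d (X : measurableType d) (R : realType) (QX : probability X R)
  (S : nat) (tau : 'I_S -> X -> R) (q : 'I_S -> R) : R :=
  (\sum_(k < S) \sum_(l < S) q k * Gamma QX tau k l * q l
   - \sum_(k < S) q k * Gamma QX tau k k)%R.

(* Main.v *)
Require Import Defs.
From HB Require Import structures.
From mathcomp Require Import all_boot all_order all_algebra.
From mathcomp Require Import all_classical all_reals all_analysis.
From mathcomp Require Import ring lra.
Import Order.TTheory GRing.Theory Num.Theory.
Local Open Scope classical_set_scope.
Local Open Scope ring_scope.
Local Open Scope ereal_scope.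
Import measurable_realfun.
Section Gen.
Context d (T : measurableType d) (R : realType) (mu : {measure set T -> \bar R}).
Hypothesis mu1 : mu setT = 1.

Lemma int_cst (c : R) : mu.-integrable setT (fun _ => c%:E).
Proof.
apply/integrableP; split; first exact: measurable_cst.
rewrite (_ : (fun _ => _) = cst `|c|%:E); last by apply/funext => x; rewrite abse_EFin.
rewrite integral_cst // mu1 mule1.
by rewrite ltry.
Qed.

Lemma int_ge0 (f : T -> R) : measurable_fun setT f -> (forall x, (0 <= f x)%R) ->
  \int[mu]_x (f x)%:E < +oo -> mu.-integrable setT (fun x => (f x)%:E).
Proof.
move=> mf f0 fi; apply/integrableP; split; first exact/measurable_EFinP.
by under eq_integral do rewrite abse_EFin ger0_norm //.
Qed.

Lemma int_le (f g : T -> R) : measurable_fun setT f -> (forall x, (`|f x| <= g x)%R) ->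
  mu.-integrable setT (fun x => (g x)%:E) -> mu.-integrable setT (fun x => (f x)%:E).
Proof.
move=> mf fg gi; apply: le_integrable gi => //; first exact/measurable_EFinP.
move=> x _; rewrite !abse_EFin lee_fin (ger0_norm (le_trans (normr_ge0 _) (fg x))).
exact: fg.
Qed.

Lemma int_add (f g : T -> R) : mu.-integrable setT (fun x => (f x)%:E) ->
  mu.-integrable setT (fun x => (g x)%:E) -> mu.-integrable setT (fun x => (f x + g x)%:E).
Proof. by move=> fi gi; under eq_fun do rewrite EFinD; exact: integrableD. Qed.

Lemma int_scale (c : R) (f : T -> R) : mu.-integrable setT (fun x => (f x)%:E) ->
  mu.-integrable setT (fun x => (c * f x)%:E).
Proof. by move=> fi; under eq_fun do rewrite EFinM; exact: integrableZl. Qed.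

Lemma int_real (f : T -> R) : mu.-integrable setT (fun x => (f x)%:E) ->
  \int[mu]_x (f x)%:E = (fine (\int[mu]_x (f x)%:E))%:E.
Proof. by move=> fi; rewrite fineK //; exact: integrable_fin_num. Qed.

End Gen.

Section L2facts.
Context d (X : measurableType d) (R : realType) (P : probability X R).
Local Notation L2P := (L2 P).
Let P1 : P setT = 1. Proof. exact: probability_setT. Qed.

Lemma L2_meas f : L2P f -> measurable_fun setT f.
Proof. by case. Qed.
Lemma L2_sq f : L2P f -> P.-integrable setT (fun x => ((f x) ^+ 2)%:E).
Proof. by case. Qed.

Lemma L2_int f : L2P f -> P.-integrable setT (fun x => (f x)%:E).
Proof.
move=> [mf fi]; apply: (@int_le _ _ _ _ _ (fun x => 1 + f x ^+ 2)%R) => //.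
  move=> x; rewrite -real_normK ?num_real //.
  have := normr_ge0 (f x); move=> a0; nra.
by apply: int_add => //; apply: int_cst.
Qed.

Lemma L2_mul f g : L2P f -> L2P g -> P.-integrable setT (fun x => (f x * g x)%:E).
Proof.
move=> [mf fi] [mg gi]; apply: (@int_le _ _ _ _ _ (fun x => f x ^+ 2 + g x ^+ 2)%R) => //.
  exact: measurable_funM.
  move=> x; rewrite normrM -(real_normK (num_real (f x))) -(real_normK (num_real (g x))).
  have := normr_ge0 (f x); have := normr_ge0 (g x).
  move=> b0 a0; nra.
exact: int_add.
Qed.

Lemma L2D f g : L2P f -> L2P g -> L2P (fun x => f x + g x)%R.
Proof.
move=> [mf fi] [mg gi]; split; first exact: measurable_funD.
apply: (@int_le _ _ _ _ _ (fun x => 2 * f x ^+ 2 + 2 * g x ^+ 2)%R) => //.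
  exact/measurable_funX/measurable_funD.
  move=> x; rewrite ger0_norm ?sqr_ge0 //; have := sqr_ge0 (f x - g x); nra.
by apply: int_add; apply: int_scale.
Qed.

Lemma L2Z c f : L2P f -> L2P (fun x => c * f x)%R.
Proof.
move=> [mf fi]; split; first exact: measurable_funM.
under eq_fun do rewrite exprMn; exact: int_scale.
Qed.

Lemma L2_0 : L2P (fun _ => 0%R).
Proof.
split; first exact: measurable_cst.
under eq_fun do rewrite expr0n /=; exact: int_cst.
Qed.

Lemma L2_sum I (r : seq I) (c : I -> X -> R) : (forall i, L2P (c i)) ->
  L2P (fun x => \sum_(i <- r) c i x)%R.
Proof.
move=> Hc; elim: r => [|a r IH].
  have -> : (fun x => \sum_(i <- [::]) c i x)%R = (fun _ => 0%R).
    by apply/funext => x; rewrite big_nil.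
  exact: L2_0.
rewrite (_ : (fun _ => _) = fun x => c a x + \sum_(i <- r) c i x)%R; last first.
  by apply/funext => x; rewrite big_cons.
exact: L2D.
Qed.

End L2facts.

Section IP.
Context d (X : measurableType d) (R : realType) (P : probability X R).
Local Notation L2P := (L2 P).

Definition ip (f g : X -> R) : R := fine (\int[P]_x (f x * g x)%:E).
Definition n2 (f g : X -> R) : R := ip (fun x => f x - g x)%R (fun x => f x - g x)%R.

Lemma ip_int f g : L2P f -> L2P g -> \int[P]_x (f x * g x)%:E = (ip f g)%:E.
Proof. by move=> lf lg; rewrite /ip fineK //; apply: integrable_fin_num => //; exact: L2_mul. Qed.

Lemma ipC f g : ip f g = ip g f.
Proof. by rewrite /ip; under eq_integral do rewrite mulrC. Qed.

Lemma ipDl f g h : L2P f -> L2P g -> L2P h ->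
  ip (fun x => f x + g x)%R h = (ip f h + ip g h)%R.
Proof.
move=> lf lg lh; rewrite /ip.
under eq_integral do rewrite mulrDl EFinD.
rewrite integralD //; try exact: L2_mul.
rewrite fineD //.
all: apply: integrable_fin_num => //; exact: L2_mul.
Qed.

Lemma ipZl c f h : L2P f -> L2P h -> ip (fun x => c * f x)%R h = (c * ip f h)%R.
Proof.
move=> lf lh; rewrite /ip.
under eq_integral do rewrite -mulrA EFinM.
rewrite integralZl //; last exact: L2_mul.
by rewrite fineM //; apply: integrable_fin_num => //; exact: L2_mul.
Qed.

Lemma ip0l h : ip (fun _ => 0%R) h = 0%R.
Proof. by rewrite /ip; under eq_integral do rewrite mul0r; rewrite integral0. Qed.

Lemma ip_suml I (r : seq I) (c : I -> X -> R) (q : I -> R) h :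
  (forall i, L2P (c i)) -> L2P h ->
  ip (fun x => \sum_(i <- r) q i * c i x)%R h = (\sum_(i <- r) q i * ip (c i) h)%R.
Proof.
move=> lc lh; elim: r => [|a r IH].
  rewrite big_nil; transitivity (ip (fun _ => 0%R) h); last exact: ip0l.
  by congr ip; apply/funext => x; rewrite big_nil.
rewrite big_cons -IH -ipZl // -ipDl //; last 2 first.
- exact: L2Z.
- by apply: L2_sum => i; exact: L2Z.
by congr ip; apply/funext => x; rewrite big_cons.
Qed.

Lemma ip_ge0 f : (0 <= ip f f)%R.
Proof. by rewrite /ip fine_ge0 // integral_ge0 // => x _; rewrite lee_fin -expr2 sqr_ge0. Qed.

Lemma n2_ge0 f g : (0 <= n2 f g)%R.
Proof. exact: ip_ge0. Qed.

Lemma n2E f g : L2P f -> L2P g -> n2 f g = (ip f f - 2 * ip f g + ip g g)%R.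
Proof.
move=> lf lg.
have lng : L2P (fun x => -1 * g x)%R by exact: L2Z.
have lfg : L2P (fun x => f x - g x)%R.
  rewrite (_ : (fun x => _) = (fun x => f x + -1 * g x)%R); first exact: L2D.
  by apply/funext => x; rewrite mulN1r.
rewrite /n2.
have E : (fun x => f x - g x)%R = (fun x => f x + -1 * g x)%R.
  by apply/funext => x; rewrite mulN1r.
rewrite {1}E ipDl // ipZl // ipC {1}E ipDl // ipZl // ipC [ip g (fun x => _)]ipC.
rewrite E ipDl // ipZl //; ring.
Qed.

Lemma L2B f g : L2P f -> L2P g -> L2P (fun x => f x - g x)%R.
Proof.
move=> lf lg; rewrite (_ : (fun x => _) = (fun x => f x + -1 * g x)%R).
  apply: L2D => //; exact: L2Z.
by apply/funext => x; rewrite mulN1r.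
Qed.

Lemma sq_n2 f g : L2P f -> L2P g -> \int[P]_x ((f x - g x) ^+ 2)%:E = (n2 f g)%:E.
Proof.
move=> lf lg; have lfg : L2P (fun x => f x - g x)%R by exact: L2B.
by rewrite /n2 -ip_int //; under eq_integral do rewrite expr2.
Qed.

Lemma ipDr f g h : L2P f -> L2P g -> L2P h ->
  ip h (fun x => f x + g x)%R = (ip h f + ip h g)%R.
Proof. by move=> *; rewrite ipC ipDl // ipC [ip g h]ipC. Qed.

Lemma ipZr c f h : L2P f -> L2P h -> ip h (fun x => c * f x)%R = (c * ip h f)%R.
Proof. by move=> *; rewrite ipC ipZl // ipC. Qed.

Lemma ip_comb2 a b f g : L2P f -> L2P g ->
  ip (fun x => a * f x + b * g x)%R (fun x => a * f x + b * g x)%R =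
  (a ^+ 2 * ip f f + 2 * a * b * ip f g + b ^+ 2 * ip g g)%R.
Proof.
move=> lf lg.
have l1 : L2P (fun x => a * f x)%R by exact: L2Z.
have l2 : L2P (fun x => b * g x)%R by exact: L2Z.
rewrite ipDl //; last exact: L2D.
rewrite !ipDr // !ipZl // !ipZr // [ip g f]ipC; ring.
Qed.

End IP.

Lemma pos_lemma (R : realType) (c M : R) :
  (forall t : R, 0 < t -> t <= 1 -> 0 <= t * c + t ^+ 2 * M)%R -> (0 <= c)%R.
Proof.
move=> H; rewrite leNgt; apply/negP => c0.
set m := `|M|%R.
have m0 : (0 <= m)%R by exact: normr_ge0.
have Mm : (M <= m)%R by exact: ler_norm.
set den := (- c + m + 1)%R.
have den0 : (0 < den)%R by rewrite /den; lra.
set t := (- c / den)%R.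
have tden : (t * den = - c)%R by rewrite /t mulrAC -mulrA divff ?mulr1 // gt_eqF.
have t0 : (0 < t)%R by rewrite /t divr_gt0 // oppr_gt0.
have t1 : (t <= 1)%R.
  have : (t * den < 1 * den)%R by rewrite mul1r tden /den; lra.
  by rewrite ltr_pM2r // => /ltW.
have := H t t0 t1.
have h2 : (t ^+ 2 * M <= t ^+ 2 * m)%R by rewrite ler_wpM2l // sqr_ge0.
have h3 : (t * (t * den) = t * (- c))%R by rewrite tden.
rewrite /den in h3.
have h4 : (0 < t ^+ 2 * (1 - c))%R by apply: mulr_gt0; [exact: exprn_gt0|lra].
move=> h1; nra.
Qed.

Lemma sum_delta (R : realType) (S : nat) (s : 'I_S) (a : 'I_S -> R) :
  (\sum_(k < S) (k == s)%:R * a k)%R = a s.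
Proof.
rewrite (bigD1 s) //= eqxx mul1r big1 ?addr0 // => k /negbTE ->; by rewrite mul0r.
Qed.

Section Alg.
Context d (X : measurableType d) (R : realType) (P : probability X R)
  (S : nat) (tau : 'I_S -> X -> R).
Hypothesis Ltau : forall s, L2 P (tau s).
Local Notation L2P := (L2 P).
Local Notation G := (Gamma P tau).
Local Notation ipP := (@ip _ _ _ P).
Local Notation n2P := (@n2 _ _ _ P).

Lemma GammaE k l : G k l = ipP (tau k) (tau l).
Proof. by []. Qed.

Lemma mix_L2 q : L2P (mix tau q).
Proof. by apply: (@L2_sum d X R P _ _ (fun s x => q s * tau s x)%R) => s; exact: L2Z. Qed.

Lemma ip_mixl q h : L2P h -> ipP (mix tau q) h = (\sum_(s < S) q s * ipP (tau s) h)%R.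
Proof. by move=> lh; rewrite /mix ip_suml. Qed.

Lemma ip_mixr q h : L2P h -> ipP h (mix tau q) = (\sum_(s < S) q s * ipP h (tau s))%R.
Proof. by move=> lh; rewrite ipC ip_mixl //; apply: eq_bigr => s _; rewrite ipC. Qed.

Lemma qobjE q : qobj P tau q =
  (ipP (mix tau q) (mix tau q) - \sum_(k < S) q k * G k k)%R.
Proof.
rewrite /qobj ip_mixl; last exact: mix_L2.
congr (_ - _)%R; apply: eq_bigr => k _.
rewrite ip_mixr // mulr_sumr; apply: eq_bigr => l _.
by rewrite GammaE; ring.
Qed.

Definition Dq (q : 'I_S -> R) := (\sum_(k < S) q k * G k k)%R.
Definition Aq (q : 'I_S -> R) := ipP (mix tau q) (mix tau q).

Lemma identity3 q f : simplex q -> L2P f ->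
  (\sum_(s < S) q s * n2P f (tau s))%R = (n2P f (mix tau q) + (Dq q - Aq q))%R.
Proof.
move=> [q0 q1] lf.
have lm := mix_L2 q.
under eq_bigr do rewrite n2E //.
rewrite n2E // /Dq /Aq ip_mixr //.
rewrite (eq_bigr (fun s => ipP f f * q s + (-2) * (q s * ipP f (tau s)) + q s * G s s)%R); last first.
  by move=> s _; rewrite GammaE; ring.
rewrite !big_split /= -!mulr_sumr q1; ring.
Qed.

Lemma DA_ge0 q : simplex q -> (0 <= Dq q - Aq q)%R.
Proof.
move=> sq; have := @identity3 q (mix tau q) sq (mix_L2 q).
have -> : n2P (mix tau q) (mix tau q) = 0%R.
  by have lm := mix_L2 q; rewrite n2E //; ring.
rewrite add0r => <-; apply: sumr_ge0 => s _; apply: mulr_ge0; first by case: sq.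
exact: n2_ge0.
Qed.

Lemma kkt qs (sqs : simplex qs)
  (Hmin : forall q, simplex q -> (qobj P tau qs <= qobj P tau q)%R) s :
  (n2P (mix tau qs) (tau s) <= Dq qs - Aq qs)%R.
Proof.
have lm := mix_L2 qs.
set A := Aq qs; set B := ipP (mix tau qs) (tau s); set C := G s s; set D := Dq qs.
suff : (0 <= -2 * A + 2 * B + D - C)%R.
  rewrite n2E // -GammaE -/C -/B; rewrite /A /Aq; lra.
apply: (@pos_lemma R _ (A - 2 * B + C)%R) => t t0 t1.
pose qt k := ((1 - t) * qs k + (k == s)%:R * t)%R.
have sqt : simplex qt.
  case: sqs => q0 q1; split.
    move=> k; apply: addr_ge0; first by apply: mulr_ge0 => //; lra.
    by apply: mulr_ge0 => //; lra.
  by rewrite big_split /= -mulr_sumr q1 (@sum_delta R S s (fun _ => t)); ring.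
have mixqt : mix tau qt = (fun x => (1 - t) * mix tau qs x + t * tau s x)%R.
  apply/funext => x; rewrite /mix.
  under eq_bigr do rewrite mulrDl -mulrA -mulrA.
  by rewrite big_split /= -mulr_sumr (@sum_delta R S s (fun k => t * tau k x)%R).
have Dqt : Dq qt = ((1 - t) * D + t * C)%R.
  rewrite /Dq; under eq_bigr do rewrite mulrDl -mulrA -mulrA.
  by rewrite big_split /= -mulr_sumr (@sum_delta R S s (fun k => t * G k k)%R).
have l1 : L2P (fun x => (1 - t) * mix tau qs x)%R by exact: L2Z.
have l2 : L2P (fun x => t * tau s x)%R by exact: L2Z.
have Aqt : Aq qt = ((1 - t) ^+ 2 * A + 2 * t * (1 - t) * B + t ^+ 2 * C)%R.
  by rewrite /Aq mixqt ip_comb2 // -GammaE -/C -/B /A /Aq; ring.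
have := Hmin qt sqt; rewrite !qobjE.
move=> h0; have h : (Aq qs - Dq qs <= Aq qt - Dq qt)%R := h0.
rewrite Aqt Dqt -/A -/D in h.
have -> : (t * (-2 * A + 2 * B + D - C) + t ^+ 2 * (A - 2 * B + C))%R =
  (((1 - t) ^+ 2 * A + 2 * t * (1 - t) * B + t ^+ 2 * C - ((1 - t) * D + t * C))
   - (A - D))%R by ring.
by rewrite subr_ge0.
Qed.

End Alg.

Lemma fin_lty (R : realType) (x : \bar R) : x \is a fin_num -> x < +oo.
Proof. by rewrite ltey_eq => ->. Qed.

Section Vertex.
Context d (X : measurableType d) (R : realType) (P : probability X R)
  (S : nat) (tau : 'I_S -> X -> R) (F : set (X -> R)).
Hypothesis HFL2 : F `<=` L2 P.
Hypothesis Htau : forall s, F (tau s).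
Local Notation L2P := (L2 P).
Local Notation n2P := (@n2 _ _ _ P).

Let Ltau s : L2P (tau s). Proof. exact: HFL2. Qed.

Lemma mfst2 (g : R -> R -> R) : measurable_fun setT (fun y : R * R => g y.1 y.2) ->
  measurable_fun setT (fun y : R * R => (g y.1 y.2)%:E).
Proof. by move=> mg; apply/measurable_EFinP. Qed.

Lemma vertex s f : L2P f -> (n2P f (tau s))%:E <= worst_regret P tau F f.
Proof.
move=> lf.
have mt : measurable_fun setT (fun x => (tau s x, (0:R)%R) : (R * R)%type).
  apply: measurable_fun_pair; [exact: L2_meas|exact: measurable_cst].
pose k : R.-pker X ~> (R * R)%type := kdirac mt.
have kE (h : R * R -> R) x : measurable_fun setT h ->
    \int[k x]_y (h y)%:E = (h (tau s x, 0%R))%:E.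
  move=> mh; rewrite /k /= /kdirac integral_dirac //; last exact/measurable_EFinP.
  by rewrite diracT mul1e.
have mdiff : measurable_fun setT (fun y : R * R => y.1 - y.2)%R.
  by apply: measurable_funB; [exact: measurable_fst|exact: measurable_snd].
have kE1 x : \int[k x]_y ((y.1 ^+ 2)%:E) = ((tau s x) ^+ 2)%:E.
  by rewrite kE //; apply: measurable_funX; exact: measurable_fst.
have kE2 x : \int[k x]_y ((y.2 ^+ 2)%:E) = 0.
  by rewrite kE /= ?expr0n //; apply: measurable_funX; exact: measurable_snd.
have kE3 x : \int[k x]_y ((y.1 - y.2)%:E) = (tau s x)%:E.
  by rewrite kE //= subr0.
have kE4 (g : X -> R) x : \int[k x]_y (((y.1 - y.2 - g x) ^+ 2)%:E) = ((tau s x - g x) ^+ 2)%:E.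
  rewrite kE //= ?subr0 //.
  by apply: measurable_funX; apply: measurable_funB => //; exact: measurable_cst.
have Ck : C P tau k.
  split; [|split].
  - rewrite /EQ; under eq_integral do rewrite kE1.
    by apply: fin_lty; apply: integrable_fin_num => //; exact: L2_sq.
  - by rewrite /EQ; under eq_integral do rewrite kE2; rewrite integral0 ltry.
  - exists (fun j => (j == s)%:R)%R.
      split; first by move=> j; rewrite ler0n.
      transitivity (\sum_(j < S) ((j == s)%:R : R) * (fun _ => 1%R) j)%R.
        by apply: eq_bigr => j _; rewrite mulr1.
      exact: sum_delta.
    by apply: aeW => x; rewrite /tauQ kE3 /mix sum_delta.
apply: le_trans; last first.
  by apply: ereal_sup_ubound; exists k.
rewrite /regret.
have -> : mse P k f = (n2P f (tau s))%:E.
  rewrite /mse /EQ -sq_n2 //; apply: eq_integral => x _; rewrite kE4.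
  by congr ((_)%:E); rewrite -sqrrN opprB.
have inf0 : ereal_inf [set mse P k f' | f' in F] <= 0.
  apply: ereal_inf_lbound; exists (tau s) => //.
  rewrite /mse /EQ; under eq_integral do rewrite kE4.
  by under eq_integral do rewrite subrr expr0n /=; rewrite integral0.
by rewrite -[X in X <= _]sube0; apply: leeB.
Qed.

End Vertex.

Section Conv.
Context d (X : measurableType d) (R : realType) (F : set (X -> R)) (HF : convex_set F).

Lemma convF (f g : X -> R) (a : R) : (0 <= a)%R -> (a <= 1)%R -> F f -> F g ->
  F (fun x => a * f x + (1 - a) * g x)%R.
Proof.
move=> a0 a1 Ff Fg.
have := HF f g (Itv01 a0 a1) (mem_set Ff) (mem_set Fg).
move/set_mem; rewrite /conv /=.
by congr F; apply/funext => x /=.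
Qed.

Lemma conv_sum (I : eqType) (r : seq I) (t : I -> X -> R) : (forall i, F (t i)) ->
  forall c : I -> R, (forall i, 0 <= c i)%R -> (\sum_(i <- r) c i = 1)%R ->
  F (fun x => \sum_(i <- r) c i * t i x)%R.
Proof.
move=> Ft; elim: r => [|a r IH] c c0 c1.
  by move: c1; rewrite big_nil => /eqP; rewrite eq_sym oner_eq0.
move: c1; rewrite big_cons.
set m := (\sum_(i <- r) c i)%R => c1.
have m0 : (0 <= m)%R by apply: sumr_ge0.
move: m0; rewrite le_eqVlt => /orP[/eqP m_eq0 | m_pos].
  have ca : c a = 1%R by rewrite -c1 -m_eq0 addr0.
  have := m_eq0; rewrite /m => /esym /eqP; rewrite psumr_eq0 // => /allP H.
  suff -> : (fun x => \sum_(i <- a :: r) c i * t i x)%R = t a by [].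
  apply/funext => x; rewrite big_cons ca mul1r big_seq big1 ?addr0 // => i ir.
  by have /eqP -> := H i ir; rewrite mul0r.
have ca0 : (c a <= 1)%R by rewrite -c1 lerDl ltW.
have Fg := IH (fun i => c i / m)%R (fun i => divr_ge0 (c0 i) (ltW m_pos)).
have s1 : (\sum_(i <- r) c i / m)%R = 1%R.
  by rewrite -mulr_suml /m divff //; exact: lt0r_neq0.
have := @convF (t a) _ (c a) (c0 a) ca0 (Ft a) (Fg s1).
have -> : (1 - c a = m)%R by rewrite -c1; ring.
suff -> : (fun x => c a * t a x + m * (\sum_(i <- r) c i / m * t i x))%R =
   (fun x => \sum_(i <- a :: r) c i * t i x)%R by [].
apply/funext => x; rewrite big_cons mulr_sumr; congr (_ + _)%R.
by apply: eq_bigr => i _; rewrite mulrA mulrCA divff ?mulr1 // lt0r_neq0.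
Qed.

End Conv.

Section Pointwise.
Context (R : realType) (mu : {measure set (R * R)%type -> \bar R}).
Hypothesis mu1 : mu setT = 1.

Let m1 : measurable_fun setT (fun y : R * R => y.1). Proof. exact: measurable_fst. Qed.
Let m2 : measurable_fun setT (fun y : R * R => y.2). Proof. exact: measurable_snd. Qed.
Let mh : measurable_fun setT (fun y : R * R => y.1 - y.2)%R.
Proof. exact: measurable_funB. Qed.

Lemma pt (a b : R) :
  \int[mu]_y ((y.1 ^+ 2)%:E) < +oo -> \int[mu]_y ((y.2 ^+ 2)%:E) < +oo ->
  \int[mu]_y ((y.1 - y.2)%:E) = b%:E ->
  \int[mu]_y (((y.1 - y.2 - a) ^+ 2)%:E) =
  \int[mu]_y (((y.1 - y.2 - b) ^+ 2)%:E) + ((a - b) ^+ 2)%:E.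
Proof.
move=> h1 h2 h3.
have i1 : mu.-integrable setT (fun y : R * R => (y.1 ^+ 2)%:E).
  apply: int_ge0 => //; [exact: measurable_funX | move=> y; exact: sqr_ge0].
have i2 : mu.-integrable setT (fun y : R * R => (y.2 ^+ 2)%:E).
  apply: int_ge0 => //; [exact: measurable_funX | move=> y; exact: sqr_ge0].
have iH2 : mu.-integrable setT (fun y : R * R => ((y.1 - y.2) ^+ 2)%:E).
  apply: (@int_le _ _ _ _ _ (fun y : R * R => 2 * y.1 ^+ 2 + 2 * y.2 ^+ 2)%R).
  - exact: measurable_funX.
  - move=> y; rewrite ger0_norm ?sqr_ge0 //; have := sqr_ge0 (y.1 + y.2)%R; nra.
  - by apply: int_add; apply: int_scale.
have iH : mu.-integrable setT (fun y : R * R => (y.1 - y.2)%:E).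
  apply: (@int_le _ _ _ _ _ (fun y : R * R => 1 + (y.1 - y.2) ^+ 2)%R) => //.
  - move=> y; rewrite -real_normK ?num_real //.
    have := normr_ge0 (y.1 - y.2)%R; move=> a0; nra.
  - by apply: int_add => //; exact: int_cst.
have iB : mu.-integrable setT (fun y : R * R => ((y.1 - y.2 - b) ^+ 2)%:E).
  apply: (@int_le _ _ _ _ _ (fun y : R * R => 2 * (y.1 - y.2) ^+ 2 + 2 * b ^+ 2)%R).
  - apply: measurable_funX; apply: measurable_funB => //; exact: measurable_cst.
  - move=> y; rewrite ger0_norm ?sqr_ge0 //; have := sqr_ge0 (y.1 - y.2 + b)%R; nra.
  - by apply: int_add; [apply: int_scale | exact: int_cst].
have iL : mu.-integrable setT (fun y : R * R => (2 * (b - a) * (y.1 - y.2))%:E).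
  exact: int_scale.
have iC : mu.-integrable setT (fun y : R * R => ((a - b) ^+ 2 - 2 * (b - a) * b)%:E).
  exact: int_cst.
rewrite (eq_integral (fun y : R * R => ((y.1 - y.2 - b) ^+ 2)%:E
    + (2 * (b - a) * (y.1 - y.2))%:E + ((a - b) ^+ 2 - 2 * (b - a) * b)%:E)); last first.
  by move=> y _; rewrite -!EFinD; congr (_%:E); ring.
rewrite integralD //; last exact: integrableD.
rewrite integralD //.
have -> : \int[mu]_y ((2 * (b - a) * (y.1 - y.2))%:E) = (2 * (b - a) * b)%:E.
  transitivity (\int[mu]_y ((2 * (b - a))%:E * (y.1 - y.2)%:E)).
    by apply: eq_integral => y _; rewrite EFinM.
  by rewrite integralZl // h3 -EFinM.
have -> : \int[mu]_y (((a - b) ^+ 2 - 2 * (b - a) * b)%:E) =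
    ((a - b) ^+ 2 - 2 * (b - a) * b)%:E.
  by rewrite integral_cst // mu1 mule1.
rewrite -addeA -EFinD.
by congr (_ + _%:E); ring.
Qed.

End Pointwise.

Section Decomp.
Context d (X : measurableType d) (R : realType) (P : probability X R)
  (k : R.-pker X ~> (R * R)%type).
Local Notation L2P := (L2 P).
Local Notation n2P := (@n2 _ _ _ P).

Lemma meas_kint (h : X -> R * R -> R) :
  measurable_fun setT (fun z : X * (R * R) => h z.1 z.2) -> (forall x y, 0 <= h x y)%R ->
  measurable_fun setT (fun x => \int[k x]_y (h x y)%:E).
Proof.
move=> mh h0.
apply: (measurable_fun_integral_finite_kernel (fun z : X * (R * R) => (h z.1 z.2)%:E) k).
  by move=> z; rewrite lee_fin.
exact/measurable_EFinP.
Qed.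

Lemma meas_sq (g : X -> R) : measurable_fun setT g ->
  measurable_fun setT (fun x => \int[k x]_y (((y.1 - y.2 - g x) ^+ 2)%:E)).
Proof.
move=> mg; apply: (@meas_kint (fun x y => (y.1 - y.2 - g x) ^+ 2)%R); last first.
  by move=> x y; exact: sqr_ge0.
apply: measurable_funX; apply: measurable_funB; last first.
  exact: measurableT_comp mg measurable_fst.
apply: measurable_funB.
  exact: measurableT_comp measurable_fst measurable_snd.
exact: measurableT_comp measurable_snd measurable_snd.
Qed.

Lemma fin_ae (h : R * R -> R) : measurable_fun setT h -> (forall y, 0 <= h y)%R ->
  \int[P]_x \int[k x]_y (h y)%:E < +oo ->
  {ae P, forall x, setT x -> \int[k x]_y (h y)%:E \is a fin_num}.
Proof.
move=> mh h0 hfin; apply: integrable_ae => //.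
have mi : measurable_fun setT (fun x => \int[k x]_y (h y)%:E).
  apply: (@meas_kint (fun _ y => h y)) => //.
  exact: measurableT_comp mh measurable_snd.
apply/integrableP; split => //.
rewrite (eq_integral (fun x => \int[k x]_y (h y)%:E)) //.
move=> x _; rewrite gee0_abs //; apply: integral_ge0 => y _; by rewrite lee_fin.
Qed.

Lemma mse_decomp (g : X -> R) : L2P g ->
  EQ P k (fun y1 _ _ => y1 ^+ 2)%R < +oo -> EQ P k (fun _ y0 _ => y0 ^+ 2)%R < +oo ->
  {ae P, forall x, tauQ k x = (g x)%:E} ->
  forall f, L2P f -> mse P k f = mse P k g + (n2P f g)%:E.
Proof.
move=> lg e1 e2 tq f lf.
have mf : measurable_fun setT f by case: lf.
have mg : measurable_fun setT g by case: lg.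
have a1 := @fin_ae (fun y => y.1 ^+ 2)%R (measurable_funX _ measurable_fst)
  (fun y => sqr_ge0 _) e1.
have a2 := @fin_ae (fun y => y.2 ^+ 2)%R (measurable_funX _ measurable_snd)
  (fun y => sqr_ge0 _) e2.
rewrite /mse /EQ.
have E : \int[P]_x \int[k x]_y (((y.1 - y.2 - f x) ^+ 2)%:E) =
  \int[P]_x (\int[k x]_y (((y.1 - y.2 - g x) ^+ 2)%:E) + ((f x - g x) ^+ 2)%:E).
  apply: ae_eq_integral => //.
  - exact: meas_sq.
  - apply: emeasurable_funD; first exact: meas_sq.
    by apply/measurable_EFinP; apply: measurable_funX; exact: measurable_funB.
  - apply: filterS3 a1 a2 tq => x h1 h2 h3 _.
    apply: pt; first exact: prob_kernel.
    + exact: fin_lty (h1 Logic.I).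
    + exact: fin_lty (h2 Logic.I).
    + exact: h3.
rewrite E ge0_integralD //.
- by rewrite sq_n2.
- by move=> x _; apply: integral_ge0 => y _; rewrite lee_fin sqr_ge0.
- exact: meas_sq.
- by move=> x _; rewrite lee_fin sqr_ge0.
- by apply/measurable_EFinP; apply: measurable_funX; exact: measurable_funB.
Qed.

End Decomp.

Lemma regret_le d (X : measurableType d) (R : realType) (P : probability X R)
  (k : R.-pker X ~> (R * R)%type) (F : set (X -> R)) (HF : F `<=` L2 P)
  (g : X -> R) : L2 P g ->
  EQ P k (fun y1 _ _ => y1 ^+ 2)%R < +oo -> EQ P k (fun _ y0 _ => y0 ^+ 2)%R < +oo ->
  {ae P, forall x, tauQ k x = (g x)%:E} ->
  forall fs, L2 P fs -> regret P F k fs <= (@n2 _ _ _ P fs g)%:E.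
Proof.
move=> lg e1 e2 tq fs lfs; rewrite /regret.
have dec := @mse_decomp d X R P k g lg e1 e2 tq.
have lb : mse P k g <= ereal_inf [set mse P k f' | f' in F].
  apply: le_ereal_inf_tmp => _ [f' Ff' <-]; rewrite (dec f' (HF _ Ff')).
  by apply: leeDl; rewrite lee_fin n2_ge0.
apply: le_trans (leeB (le_refl (mse P k fs)) lb) _.
rewrite (dec fs lfs); case: (mse P k g) => [r| |].
- by rewrite addeAC subee // add0e.
- by rewrite addeNy leNye.
- by rewrite !addNye leNye.
Qed.

Theorem theorem1 (d : measure_display) (X : measurableType d) (R : realType)
  (QX : probability X R) (S : nat) (tau : 'I_S -> X -> R) (F : set (X -> R))
  (HFL2 : F `<=` L2 QX) (HFconv : convex_set F) (Htau : forall s, F (tau s))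
  (qstar : 'I_S -> R) (Hqs : simplex qstar)
  (Hqmin : forall q, simplex q -> (qobj QX tau qstar <= qobj QX tau q)%R) :
  F (mix tau qstar) /\
  (forall f, F f -> worst_regret QX tau F (mix tau qstar) <= worst_regret QX tau F f) /\
  (forall f, F f ->
     (forall g, F g -> worst_regret QX tau F f <= worst_regret QX tau F g) ->
     {ae QX, forall x, f x = mix tau qstar x}).
Proof.
have Ltau : forall s, L2 QX (tau s) by move=> s; exact: HFL2.
have Ffs : F (mix tau qstar).
  by case: Hqs => q0 q1; exact: (@conv_sum d X R F HFconv _ _ tau Htau qstar q0 q1).
have lfs : L2 QX (mix tau qstar) by exact: mix_L2.
set fs := mix tau qstar in Ffs lfs *.
set V := (@Dq _ _ _ QX _ tau qstar - @Aq _ _ _ QX _ tau qstar)%R.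
have kk := @kkt _ _ _ QX _ tau Ltau qstar Hqs Hqmin.
have UB : worst_regret QX tau F fs <= V%:E.
  apply: ge_ereal_sup => _ [k [e1 [e2 [q sq tq]]] <-].
  apply: le_trans (@regret_le _ _ _ QX k F HFL2 _ (@mix_L2 _ _ _ QX _ tau Ltau q) e1 e2 tq fs lfs) _.
  rewrite lee_fin.
  have id := @identity3 _ _ _ QX _ tau Ltau q fs sq lfs.
  have := @DA_ge0 _ _ _ QX _ tau Ltau q sq.
  have : (\sum_(s < S) q s * @n2 _ _ _ QX fs (tau s) <= V)%R.
    apply: le_trans (_ : \sum_(s < S) q s * V <= V)%R.
      by apply: ler_sum => s _; apply: ler_wpM2l; [case: sq | exact: kk].
    by rewrite -mulr_suml; case: sq => _ ->; rewrite mul1r.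
  lra.
have LB f : F f -> V%:E <= worst_regret QX tau F f.
  move=> Ff; have lf := HFL2 _ Ff.
  have id := @identity3 _ _ _ QX _ tau Ltau qstar f Hqs lf.
  have vx s := @vertex _ _ _ QX _ tau F HFL2 Htau s f lf.
  have n0 := @n2_ge0 _ _ _ QX f fs.
  case E: (worst_regret QX tau F f) => [w| |].
  - rewrite lee_fin.
    have : (\sum_(s < S) qstar s * @n2 _ _ _ QX f (tau s) <= w)%R.
      apply: le_trans (_ : \sum_(s < S) qstar s * w <= w)%R.
        apply: ler_sum => s _; apply: ler_wpM2l; first by case: Hqs.
        by have := vx s; rewrite E lee_fin.
      by rewrite -mulr_suml; case: Hqs => _ ->; rewrite mul1r.
    rewrite /V; lra.
  - exact: leey.
  - exfalso; have hs : forall s : 'I_S, False.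
      by move=> s; have := vx s; rewrite E leeNy_eq.
    case: Hqs => _; rewrite big1 => [/eqP|s _]; first by rewrite eq_sym oner_eq0.
    by case: (hs s).
split; first exact: Ffs.
split.
  by move=> f Ff; exact: le_trans UB (LB f Ff).
move=> f Ff Hmin.
have lf := HFL2 _ Ff.
have hW : worst_regret QX tau F f <= V%:E := le_trans (Hmin fs Ffs) UB.
have hs s : (@n2 _ _ _ QX f (tau s) <= V)%R.
  by rewrite -lee_fin; exact: le_trans (@vertex _ _ _ QX _ tau F HFL2 Htau s f lf) hW.
have id := @identity3 _ _ _ QX _ tau Ltau qstar f Hqs lf.
have n0 := @n2_ge0 _ _ _ QX f fs.
have hsum : (\sum_(s < S) qstar s * @n2 _ _ _ QX f (tau s) <= V)%R.
  apply: le_trans (_ : \sum_(s < S) qstar s * V <= V)%R.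
    by apply: ler_sum => s _; apply: ler_wpM2l; [case: Hqs | exact: hs].
  by rewrite -mulr_suml; case: Hqs => _ ->; rewrite mul1r.
have nz : @n2 _ _ _ QX f fs = 0%R by rewrite /V in hsum; lra.
have mf : measurable_fun setT (fun x => ((f x - fs x) ^+ 2)%:E).
  apply/measurable_EFinP; apply: measurable_funX; apply: measurable_funB.
  - by case: lf.
  - by case: lfs.
have I0 : \int[QX]_x `|((f x - fs x) ^+ 2)%:E| = 0.
  under eq_integral do rewrite gee0_abs ?lee_fin ?sqr_ge0 //.
  by rewrite sq_n2 // nz.
have := (ae_eq_integral_abs QX measurableT mf).1 I0.
apply: filterS => x /(_ Logic.I) /= /eqP; rewrite eqe sqrf_eq0 subr_eq0 => /eqP.
by [].
Qed.
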